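(* In the setting of the context, assume $G_{xy}^{[1]}=1$, $G_x^{[1]}\neq1$ and $G_x/G_x^{[1]}\cong A_5$. Then $G_x\cong A_5\times A_4$ and $G_e\cong A_4\wr C_2$.
   Context: $\mathcal{A}=(G_x,G_e,G_{xy})$ is a finite, primitive amalgam of degree $(5,2)$ (no nontrivial subgroup of $G_{xy}$ normal in both $G_x$ and $G_e$; $|G_x:G_{xy}|=5$, $|G_e:G_{xy}|=2$), $G=G_x*_{G_{xy}}G_e$ acts on the coset graph (5-valent tree) $\Gamma$, $x$ is the vertex with stabiliser $G_x$, $y$ the neighbour with $G_e$ the setwise stabiliser of $\{x,y\}$ and $G_x\cap G_y=G_{xy}$. $G_z^{[1]}$ is the pointwise stabiliser of $z$ and its neighbours, $G_{xy}^{[1]}=G_x^{[1]}\cap G_y^{[1]}$. *)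

(* Defs.v *)
From mathcomp Require Import all_boot all_fingroup all_solvable.
Set Implicit Arguments.
Unset Strict Implicit.
Unset Printing Implicit Defensive.
Local Open Scope group_scope.

Notation A4 := ('Alt_('I_4)).
Notation A5 := ('Alt_('I_5)).

(* The (imprimitive permutational) wreath product A_4 wr C_2, acting on
   'I_4 * bool (two blocks 'I_4 * {false} and 'I_4 * {true} of size 4):
   p (i, c) = (a_c i, s c) with a_false, a_true in A_4 and s : {perm bool}
   (s ranges over C_2 = Sym(bool)). *)
Definition wreathA4C2 : {set {perm 'I_4 * bool}} :=
  [set p : {perm 'I_4 * bool} |
     [exists s : {perm bool}, exists a0 : {perm 'I_4}, exists a1 : {perm 'I_4},
        [&& a0 \in A4, a1 \in A4 &
            [forall ic : 'I_4 * bool,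
               p ic == ((if ic.2 then a1 else a0) ic.1, s ic.2)]]]].

(* Main.v *)
Require Import Defs.
From mathcomp Require Import all_boot all_fingroup all_solvable.
From mathcomp Require Import zify.
Set Implicit Arguments.
Unset Strict Implicit.
Unset Printing Implicit Defensive.
Local Open Scope group_scope.

Definition c3 : {perm 'I_3} := tperm ord0 (lift ord0 ord0) * tperm (lift ord0 ord0) ord_max.

Lemma c3_nofix (j : 'I_3) : c3 j != j.
Proof.
rewrite permM !permE.
by case: j => [[|[|[|]]] Hj].
Qed.

Lemma c3_even : odd_perm c3 = false.
Proof. by rewrite odd_permM !odd_tperm. Qed.

Definition ck (k : 'I_4) : {perm 'I_4} := lift_perm k k c3.

Lemma ck_A4 k : ck k \in A4.
Proof. by rewrite Alt_even odd_lift_perm addbb c3_even. Qed.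

Lemma ck_fix k j : (ck k j == j) = (j == k).
Proof.
case: (unliftP k j) => [j'|] ->; last by rewrite lift_perm_id !eqxx.
rewrite lift_perm_lift (inj_eq (@lift_inj _ k)) (negbTE (c3_nofix j')).
by rewrite eq_sym (negbTE (neq_lift _ _)).
Qed.

Lemma center_A4 : 'Z(A4) = 1.
Proof.
apply/trivgP/subsetP=> z /centerP [_ cz]; rewrite inE.
apply/eqP/permP=> k; rewrite perm1.
have := cz _ (ck_A4 k); move/(congr1 (fun p : {perm 'I_4} => p k)).
rewrite !permM.
have -> : ck k k = k by apply/eqP; rewrite ck_fix.
by move/esym/eqP; rewrite eq_sym ck_fix => /eqP.
Qed.

Lemma center_isog_A4 (gT : finGroupType) (G : {group gT}) : G \isog A4 -> 'Z(G) = 1.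
Proof.
case/isogP=> g injg imG.
apply/eqP; rewrite trivg_card1 -(card_injm injg (center_sub G)).
by rewrite injm_center // imG center_A4 cards1.
Qed.


Lemma Alt_transitive n : 2 < n -> [transitive 'Alt_('I_n), on setT | 'P].
Proof.
move=> n3; apply: (@ntransitive1 _ _ _ _ _ (n.-2)); first by case: n n3 => [|[|[|]]].
by have := Alt_trans ('I_n); rewrite card_ord.
Qed.

Lemma card_stab_Alt n (i : 'I_n) : 2 < n ->
  (n * #|'C_('Alt_('I_n))[i | 'P]|)%N = #|'Alt_('I_n)|.
Proof.
move=> n3; rewrite -(card_orbit_stab 'P [group of 'Alt_('I_n)] i) (atransP (Alt_transitive n3)) ?inE //.
by rewrite cardsT card_ord.
Qed.

Section Lift.
Variables (n : nat) (i : 'I_n.+1).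

Definition liftm_fun (s : 'S_n) : 'S_n.+1 := lift_perm i i s.
Lemma liftm_morph : {in [set: 'S_n] &, {morph liftm_fun : x y / x * y}}.
Proof. by move=> x y _ _; rewrite /liftm_fun lift_permM. Qed.
Canonical liftm := Morphism liftm_morph.

Lemma injm_liftm : 'injm liftm.
Proof.
apply/subsetP=> s /mker; rewrite /= /liftm_fun => s1; rewrite inE.
apply/eqP/permP=> k; apply: (@lift_inj _ i).
by rewrite -(lift_perm_lift i i) s1 !perm1.
Qed.

Lemma liftm_fix (s : 'S_n) : liftm s i = i.
Proof. exact: lift_perm_id. Qed.

Lemma liftm_Alt (s : 'S_n) : (liftm s \in 'Alt_('I_n.+1)) = (s \in 'Alt_('I_n)).
Proof. by rewrite !Alt_even /= /liftm_fun odd_lift_perm addbb. Qed.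

Lemma im_liftm_Alt : 1 < n ->
  liftm @* 'Alt_('I_n) = 'C_('Alt_('I_n.+1))[i | 'P].
Proof.
move=> n2; apply/eqP; rewrite eqEcard; apply/andP; split.
  apply/subsetP=> p /morphimP [s _ As ->]; rewrite inE liftm_Alt As /=.
  by apply/astab1P; rewrite /= /aperm liftm_fix.
rewrite card_injm ?subsetT ?injm_liftm //.
have e1 := card_stab_Alt i (n2 : 2 < n.+1).
have e2 := @card_Alt ('I_n.+1); have e3 := @card_Alt ('I_n).
rewrite !card_ord in e2 e3.
have e4 : (n.+1 * (2 * #|'C_('Alt_('I_n.+1))[i | 'P]|) = n.+1 * (2 * #|'Alt_('I_n)|))%N.
  by rewrite mulnCA e1 e2 ?e3 // ltnW.
move: e4 => /eqP; rewrite eqn_mul2l /= eqn_mul2l /= => /eqP ->; exact: leqnn.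
Qed.

End Lift.


Section Sub12.
Variable H : {group 'S_5}.
Hypotheses (sHA : H \subset A5) (oH : #|H| = 12).

Lemma orbit_dvd (x : 'I_5) : #|orbit 'P H x| %| 12.
Proof. by rewrite -oH -(card_orbit_stab 'P H x) dvdn_mulr. Qed.

Lemma orbit1_fix (x : 'I_5) : #|orbit 'P H x| = 1%N -> H \subset 'C[x | 'P].
Proof.
move/card_orbit1=> Ox; apply/subsetP=> h Hh; apply/astab1P.
by have := mem_orbit 'P x Hh; rewrite Ox => /set1P.
Qed.

Lemma no_orbit2 (x : 'I_5) : #|orbit 'P H x| != 2.
Proof.
apply/negP=> /eqP O2.
have : #|orbit 'P H x :\ x| = 1%N by rewrite (cardsD1 x) orbit_refl in O2; case: O2.
move/eqP/cards1P=> [b Eb].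
have Ob : b \in orbit 'P H x by have := set11 b; rewrite -Eb => /setD1P[].
have nbx : b != x by have := set11 b; rewrite -Eb => /setD1P[].
have eqO : orbit 'P H x = [set x; b].
  apply/eqP; rewrite eq_sym eqEcard O2 cards2 eq_sym nbx leqnn andbT.
  by apply/subsetP=> y /set2P [->|->] //; exact: orbit_refl.
have oW : #|'C_H[x | 'P]| = 6.
  have := card_orbit_stab 'P H x; rewrite O2 oH.
  by move/eqP; rewrite -[12]/(2 * 6)%N eqn_mul2l => /eqP.
case: (unliftP x b) => [b' Eb'|Ebx]; last by rewrite Ebx eqxx in nbx.
suff : #|'C_H[x | 'P]| <= #|'C_A4[b' | 'P]|.
  rewrite oW; have := card_stab_Alt b' (isT : 2 < 4).
  have e := @card_Alt ('I_4); rewrite card_ord in e; have {}e := e isT.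
  by move=> h; have : #|'C_A4[b' | 'P]| = 3; [apply/eqP; rewrite -(@eqn_pmul2l 4) // h -(@eqn_pmul2l 2) // e | move->].
rewrite -(card_injm (injm_liftm x) (subsetT _)).
apply: subset_leq_card; apply/subsetP=> w /setIP [Hw /astab1P wx].
have : w \in 'C_A5[x | 'P] by rewrite inE (subsetP sHA) //; exact/astab1P.
rewrite -im_liftm_Alt // => /morphimP [s _ As ws].
apply/morphimP; exists s; [by rewrite inE | | exact: ws].
apply/setIP; split => //; apply/astab1P; rewrite /= /aperm.
have wb : w b \in orbit 'P H x.
  by have /orbit_eqP <- := Ob; exact: mem_orbit.
rewrite eqO in wb; case/set2P: wb => wb.
  by move: nbx; rewrite (perm_inj (etrans wb (esym wx))) eqxx.
apply: (@lift_inj _ x); rewrite -(lift_perm_lift x x s b').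
by rewrite -[lift_perm _ _ _]/(liftm x s) -ws -Eb'.
Qed.

Lemma sub12_fix : exists i, H \subset 'C[i | 'P].
Proof.
have small x : #|orbit 'P H x| <= 2 -> exists i, H \subset 'C[i | 'P].
  move=> le2; have := no_orbit2 x.
  have : 0 < #|orbit 'P H x| by apply/card_gt0P; exists x; exact: orbit_refl.
  case: #|orbit 'P H x| le2 (@orbit1_fix x) => [|[|[|]]] //.
  by move=> _ h _ _; exists x; exact: h.
pose x0 : 'I_5 := ord0.
have le5 : #|orbit 'P H x0| <= 5 by have := max_card (orbit 'P H x0); rewrite card_ord.
have [le2|gt2] := leqP #|orbit 'P H x0| 2; first exact: small le2.
have lt5 : #|orbit 'P H x0| < 5.
  rewrite ltn_neqAle le5 andbT; apply/negP=> /eqP e5.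
  by have := orbit_dvd x0; rewrite e5.
have [j Oj] : exists j, j \notin orbit 'P H x0.
  apply/existsP; rewrite -negb_forall; apply/negP=> /forallP all.
  have : orbit 'P H x0 = setT by apply/setP=> y; rewrite inE all.
  by move=> e; move: lt5; rewrite e cardsT card_ord ltnn.
apply: (small j).
have sub : orbit 'P H j \subset ~: orbit 'P H x0.
  apply/subsetP=> y Oy; rewrite inE; apply/negP=> Oy0; apply: (negP Oj).
  by have /orbit_eqP <- := Oy0; have /orbit_eqP -> := Oy; exact: orbit_refl.
have := subset_leq_card sub; have hC := cardsC (orbit 'P H x0); rewrite card_ord in hC; lia.
Qed.

Lemma sub12_isog : H \isog A4.
Proof.
have [i sHi] := sub12_fix.
have eH : H :=: 'C_A5[i | 'P].
  apply/eqP; rewrite eqEcard subsetI sHA sHi /= oH.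
  have := card_stab_Alt i (isT : 2 < 5).
  have e := @card_Alt ('I_5); rewrite card_ord in e; have {}e := e isT.
  by move=> h; have : #|'C_A5[i | 'P]| = 12; [apply/eqP; rewrite -(@eqn_pmul2l 5) // h -(@eqn_pmul2l 2) // e | move->].
rewrite isog_sym eH -(im_liftm_Alt i) //.
exact: sub_isog (subsetT _) (injm_liftm i).
Qed.

End Sub12.


Definition blk_fun (c : bool) (p : {perm 'I_4}) (ic : 'I_4 * bool) : 'I_4 * bool :=
  (if ic.2 == c then p ic.1 else ic.1, ic.2).

Lemma blkK c p : cancel (blk_fun c p) (blk_fun c p^-1).
Proof.
by case=> i b; rewrite /blk_fun /=; case: (b == c); rewrite ?permK.
Qed.

Definition blk c p : {perm 'I_4 * bool} := perm (can_inj (blkK c p)).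

Lemma blkE c p ic : blk c p ic = (if ic.2 == c then p ic.1 else ic.1, ic.2).
Proof. by rewrite permE. Qed.

Lemma blkM c p q : blk c (p * q) = blk c p * blk c q.
Proof.
apply/permP=> [[i b]]; rewrite permM !blkE /=.
by case: (b == c); rewrite ?permM.
Qed.

Lemma blk1 c : blk c 1 = 1.
Proof. by apply/permP=> [[i b]]; rewrite blkE perm1 /=; case: (b == c); rewrite ?perm1. Qed.

Lemma blk_eq1 c p : (blk c p == 1) = (p == 1).
Proof.
apply/eqP/eqP=> [e|->]; last exact: blk1.
apply/permP=> i; have := congr1 (fun q : {perm _} => q (i, c)) e.
by rewrite blkE perm1 /= eqxx perm1 => -[].
Qed.

Lemma blk_comm p q : commute (blk false p) (blk true q).
Proof.
apply/permP=> [[i b]]; rewrite !permM !blkE /=.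
by case: b.
Qed.

Lemma blk_snd c p ic : (blk c p ic).2 = ic.2.
Proof. by rewrite blkE. Qed.

Definition sw_fun (ic : 'I_4 * bool) : 'I_4 * bool := (ic.1, ~~ ic.2).
Lemma sw_inv : involutive sw_fun.
Proof. by case=> i b; rewrite /sw_fun /= negbK. Qed.
Definition sw : {perm 'I_4 * bool} := perm (inv_inj sw_inv).

Lemma swE ic : sw ic = (ic.1, ~~ ic.2).
Proof. by rewrite permE. Qed.

Lemma sw2 : sw * sw = 1.
Proof. by apply/permP=> [[i b]]; rewrite permM !swE perm1 /= negbK. Qed.

Lemma swV : sw^-1 = sw.
Proof. by apply/eqP; rewrite eq_invg_mul sw2. Qed.

Lemma sw_neq1 : sw != 1.
Proof.
apply/eqP=> e; have := congr1 (fun q : {perm _} => q (ord0, false)) e.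
by rewrite swE perm1.
Qed.

Lemma order_sw : #[sw] = 2.
Proof.
have : #[sw] %| 2 by rewrite order_dvdn expgS expg1 sw2.
rewrite dvdn_divisors // !inE => /orP [] /eqP // o1.
by move: sw_neq1; rewrite -order_eq1 o1.
Qed.

Lemma blkJ c p : blk c p ^ sw = blk (~~ c) p.
Proof.
apply/permP=> [[i b]]; rewrite conjgE swV !permM swE blkE swE !blkE /=.
by case: b; case: c.
Qed.

Lemma blkJ2 p q : (blk false p * blk true q) ^ sw = blk true p * blk false q.
Proof. by rewrite conjMg !blkJ. Qed.

Lemma blk_inj c : injective (blk c).
Proof.
move=> p q e; apply/permP=> i.
have := congr1 (fun r : {perm _} => r (i, c)) e.
by rewrite !blkE /= eqxx => -[].
Qed.

Lemma blk_ft p q : blk false p = blk true q -> p = 1.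
Proof.
move=> e; apply/permP=> i; have := congr1 (fun r : {perm _} => r (i, false)) e.
by rewrite !blkE /= perm1 => -[].
Qed.

Lemma blk_snd2 c d p q ic : ((blk c p * blk d q) ic).2 = ic.2.
Proof. by rewrite permM !blk_snd. Qed.

Lemma sw_notin c d p q : sw != blk c p * blk d q.
Proof.
apply/eqP=> e; have := blk_snd2 c d p q (ord0, false).
by rewrite -e swE.
Qed.

Definition swb : {perm bool} := perm (inv_inj negbK).

Lemma wreath_mem0 p0 p1 : p0 \in A4 -> p1 \in A4 ->
  blk false p0 * blk true p1 \in wreathA4C2.
Proof.
move=> A0 A1; rewrite inE; apply/existsP; exists 1; apply/existsP; exists p0.
apply/existsP; exists p1; rewrite A0 A1; apply/forallP=> [[i b]].
by rewrite permM !blkE perm1 /=; case: b.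
Qed.

Lemma wreath_mem1 p0 p1 : p0 \in A4 -> p1 \in A4 ->
  blk false p0 * blk true p1 * sw \in wreathA4C2.
Proof.
move=> A0 A1; rewrite inE; apply/existsP; exists swb; apply/existsP; exists p0.
apply/existsP; exists p1; rewrite A0 A1; apply/forallP=> [[i b]].
by rewrite !permM !blkE swE permE /=; case: b.
Qed.

Lemma wreath_dec (p : {perm 'I_4 * bool}) (sb : {perm bool}) (a0 a1 : {perm 'I_4}) :
  (forall ic, p ic == ((if ic.2 then a1 else a0) ic.1, sb ic.2)) ->
  p = blk false a0 * blk true a1 * (if sb false then sw else 1).
Proof.
move=> E.
have sbt : sb true = ~~ sb false.
  have : sb true != sb false by rewrite (inj_eq perm_inj).
  by case: (sb true); case: (sb false).
apply/permP=> [[i b]]; rewrite (eqP (E (i, b))) !permM !blkE /=.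
case: b; rewrite /= ?sbt; case: (sb false); by rewrite ?swE ?perm1.
Qed.


Lemma ti_normal_cents (gT : finGroupType) (G A B : {group gT}) :
  A <| G -> B <| G -> A :&: B = 1 -> A \subset 'C(B).
Proof.
move=> nA nB ti; apply/commG1P/trivgP; rewrite -ti; apply: commg_subI.
  by rewrite subsetI subxx (subset_trans (normal_sub nA) (normal_norm nB)).
by rewrite subsetI subxx (subset_trans (normal_sub nB) (normal_norm nA)).
Qed.

Lemma small_abelian (gT : finGroupType) (N : {group gT}) :
  #|N| \in [:: 1; 2; 3; 4]%N -> abelian N.
Proof.
rewrite !inE => /or4P [] /eqP oN.
- by move/eqP: oN; rewrite -trivg_card1 => /eqP ->; exact: abelian1.
- by apply: cyclic_abelian; apply: prime_cyclic; rewrite oN.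
- by apply: cyclic_abelian; apply: prime_cyclic; rewrite oN.
- by apply: (@card_p2group_abelian _ 2); rewrite ?oN.
Qed.

Lemma card_A5 : #|A5| = 60.
Proof. by apply/eqP; rewrite -(@eqn_pmul2l 2) // card_Alt card_ord. Qed.
Lemma card_A4 : #|A4| = 12.
Proof. by apply/eqP; rewrite -(@eqn_pmul2l 2) // card_Alt card_ord. Qed.

Section Main.
Variables (xT eT : finGroupType) (Gx Bx : {group xT}) (Ge Be : {group eT}).
Variable (f : {morphism Bx >-> eT}).
Hypotheses (sBG : Bx \subset Gx) (sBGe : Be \subset Ge) (injf : 'injm f)
  (fB : f @* Bx = Be) (iB : #|Gx : Bx| = 5) (iBe : #|Ge : Be| = 2).
Variable t : eT.
Hypotheses (tGe : t \in Ge :\: Be).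
Let K := gcore Bx Gx.
Hypotheses (ti : f @* K :&: (f @* K) :^ t = 1) (ntK : K != 1)
  (isoQ : Gx / K \isog A5).

Let nKG : K <| Gx := gcore_normal sBG.
Let sKB : K \subset Bx := gcore_sub Bx Gx.
Let nKB : K <| Bx := normalS sKB sBG nKG.
Let nGK : Gx \subset 'N(K) := normal_norm nKG.

Lemma oQ : #|Gx / K| = 60.
Proof. by rewrite (card_isog isoQ) card_A5. Qed.

Lemma oGx : #|Gx| = (60 * #|K|)%N.
Proof.
by rewrite -(Lagrange (normal_sub nKG)) -card_quotient // oQ mulnC.
Qed.

Lemma oBx : #|Bx| = (12 * #|K|)%N.
Proof.
have := Lagrange sBG; rewrite iB oGx; lia.
Qed.

Lemma simpQ : simple (Gx / K).
Proof. by rewrite (isog_simple isoQ); apply: simple_Alt5; rewrite card_ord. Qed.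

Let K1 := f @* K.
Let K2 := K1 :^ t.
Let nK1 : K1 <| Be. Proof. by rewrite -fB; exact: morphim_normal. Qed.
Let oK1 : #|K1| = #|K|. Proof. exact: card_injm. Qed.
Let nBeGe : Be <| Ge := index2_normal sBGe iBe.
Let tG : t \in Ge. Proof. by case/setDP: tGe. Qed.
Let tnB : t \notin Be. Proof. by case/setDP: tGe. Qed.
Let BeJ : Be :^ t = Be.
Proof. by apply/normP; apply: (subsetP (normal_norm nBeGe)). Qed.
Let nK2 : K2 <| Be. Proof. by rewrite -BeJ normalJ. Qed.
Let oK2 : #|K2| = #|K|. Proof. by rewrite cardJg. Qed.
Let cK12 : K1 \subset 'C(K2) := ti_normal_cents nK1 nK2 ti.
Let oBe : #|Be| = (12 * #|K|)%N. Proof. by rewrite -fB card_injm // oBx. Qed.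

Lemma KC : K * 'C_Gx(K) = Gx.
Proof.
have nC : 'C_Gx(K) <| Gx.
  by have := subcent_normal Gx K; rewrite (setIidPl nGK).
have nCK : 'C_Gx(K) \subset 'N(K) := subset_trans (subsetIl _ _) nGK.
case/simpleP: simpQ => _ /(_ _ (quotient_normal K nC)) [] eq.
  have sCK : 'C_Gx(K) \subset K by rewrite -quotient_sub1 // eq.
  have sK21 : K2 \subset K1.
    have : K2 \subset 'C_Be(K1) by rewrite subsetI normal_sub // centsC.
    rewrite -fB -injm_subcent //; move/subset_trans; apply; apply: morphimS.
    by apply: subset_trans sCK; apply: setSI.
  have : #|K2| == 1%N by rewrite -trivg_card1 -ti; apply/eqP; symmetry; exact/setIidPr.
  by rewrite oK2 -trivg_card1 (negbTE ntK).
have := congr1 (fun A => coset K @*^-1 A) eq; rewrite /= !quotientK //.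
by move=> ->; rewrite mulSGid // normal_sub.
Qed.

Lemma BeC1 : K1 * 'C_Be(K1) = Be.
Proof.
have eB : K * 'C_Bx(K) = Bx.
  have := group_modl 'C_Gx(K) sKB; rewrite KC (setIidPr sBG) => e.
  rewrite -[in RHS]e; congr (_ * _).
  by rewrite [in RHS]setIC setIA (setIidPl sBG).
rewrite -[in RHS]fB; have -> : f @* Bx = f @* (K * 'C_Bx(K)) by rewrite eB.
by rewrite morphimMl // injm_subcent // fB.
Qed.

Lemma BeC2 : K2 * 'C_Be(K2) = Be.
Proof.
rewrite -[in RHS]BeJ -[in RHS]BeC1 conjsMg conjIg centJ BeJ //.
Qed.


Lemma oQB : #|Bx / K| = 12.
Proof.
rewrite card_quotient ?(subset_trans sBG nGK) //.
have := Lagrange sKB; rewrite oBx [in X in _ = X]mulnC => /eqP.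
by rewrite eqn_pmul2l ?cardG_gt0 // => /eqP.
Qed.

Lemma isoBK : Bx / K \isog A4.
Proof.
case/isogP: isoQ => g injg img.
have sBQ : Bx / K \subset Gx / K := quotientS K sBG.
apply: isog_trans (sub_isog sBQ injg) _.
apply: sub12_isog; first by rewrite -img morphimS.
by rewrite card_injm // oQB.
Qed.

Lemma isoH : Be / K1 \isog A4.
Proof.
have := sub_isog (subxx (Bx / K)) (injm_quotm nKB injf).
rewrite morphim_quotm fB => iso; rewrite isog_sym in iso.
exact: isog_trans iso isoBK.
Qed.

Lemma oK12 : #|K| = 12.
Proof.
pose N := K2 / K1; pose M := 'C_Be(K2) / K1.
have nK1B := normal_norm nK1.
have sK2B := normal_sub nK2.
have sCB : 'C_Be(K2) \subset Be := subsetIl _ _.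
have HMN : Be / K1 = N * M.
  by rewrite -quotientMl ?(subset_trans sK2B nK1B) // BeC2.
have cNM : N \subset 'C(M).
  by apply: morphim_cents; rewrite centsC subsetIr.
have ZH : 'Z(Be / K1) = 1 := center_isog_A4 isoH.
have sZH (A : {set coset_of K1}) : A \subset Be / K1 -> A \subset 'C(N) -> A \subset 'C(M) ->
    A \subset 'Z(Be / K1).
  by move=> sA cA1 cA2; rewrite subsetI sA /= HMN centM subsetI cA1.
have MN1 : N :&: M = 1.
  apply/trivgP; rewrite -ZH; apply: sZH.
  - by rewrite HMN subIset // mulG_subl.
  - by apply: subIset; apply/orP; right; rewrite centsC.
  - by apply: subIset; rewrite cNM.
have ZN : 'Z(N) = 1.
  apply/trivgP; rewrite -ZH; apply: sZH.
  - by rewrite HMN (subset_trans (center_sub _)) // mulG_subl.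
  - by apply: subIset; rewrite subxx orbT.
  - by rewrite (subset_trans (center_sub _)).
have ZM : 'Z(M) = 1.
  apply/trivgP; rewrite -ZH; apply: sZH.
  - by rewrite HMN (subset_trans (center_sub _)) // mulG_subr.
  - by rewrite (subset_trans (center_sub _)) // centsC.
  - by apply: subIset; rewrite subxx orbT.
have oH : #|Be / K1| = 12.
  rewrite card_quotient //; have := Lagrange (normal_sub nK1).
  rewrite oK1 oBe [in X in _ = X]mulnC => /eqP.
  by rewrite eqn_pmul2l ?cardG_gt0 // => /eqP.
have oNM : (#|N| * #|M|)%N = 12 by rewrite -TI_cardMg // -HMN.
have oN : #|N| = #|K|.
  by rewrite card_quotient ?(subset_trans sK2B nK1B) // -indexgI setIC ti indexg1 oK2.
have nabN : ~~ abelian N.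
  apply/negP=> /center_idP; rewrite ZN => /esym/eqP; rewrite trivg_card1 oN.
  by rewrite -trivg_card1 (negbTE ntK).
have NM : #|M| = 1%N \/ 5 <= #|M|.
  case: (boolP (#|M| \in [:: 1; 2; 3; 4]%N)) => hM.
    left; apply/eqP; rewrite -trivg_card1 -ZM; apply/eqP/esym/center_idP.
    exact: small_abelian hM.
  right; move: hM; rewrite !inE; have := cardG_gt0 M.
  by case: #|M| => [|[|[|[|[|]]]]].
have NN : 5 <= #|N|.
  have := cardG_gt0 N; case: (boolP (#|N| \in [:: 1; 2; 3; 4]%N)) => hN.
    by have := small_abelian hN; rewrite (negbTE nabN).
  by move: hN; rewrite !inE; case: #|N| => [|[|[|[|[|]]]]].
rewrite -oN; case: NM => hM; first by rewrite hM muln1 in oNM.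
by have := leq_mul NN hM; rewrite oNM.
Qed.


Lemma dBe : K1 \x K2 = Be.
Proof.
rewrite dprodE ?ti // 1?centsC //.
apply/eqP; rewrite eqEcard mul_subG ?normal_sub // TI_cardMg //.
by rewrite oK1 oK2 oBe oK12.
Qed.

Lemma isoK2 : K2 \isog A4.
Proof. exact: isog_trans (sdprod_isog (dprodWsd dBe)) isoH. Qed.

Lemma isoK1 : K1 \isog A4.
Proof. exact: isog_trans (conj_isog _ t) isoK2. Qed.

Lemma isoK : K \isog A4.
Proof. exact: isog_trans (sub_isog sKB injf) isoK1. Qed.

Lemma dGx : K \x 'C_Gx(K) = Gx.
Proof.
rewrite dprodE ?subsetIr ?KC //.
rewrite setIA (setIidPl (normal_sub nKG)).
exact: center_isog_A4 isoK.
Qed.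

Lemma isoGx : Gx \isog setX A5 A4.
Proof.
apply: (isog_dprod (etrans (dprodC _ _) dGx) (setX_dprod _ _)).
  apply: isog_trans (sdprod_isog (dprodWsd dGx)) _.
  exact: isog_trans isoQ (isog_setX1 _ _).
exact: isog_trans isoK (isog_set1X _ _).
Qed.


Lemma t2B : t ^+ 2 \in Be.
Proof.
have nBG := normal_norm nBeGe.
have tN : t \in 'N(Be) := subsetP nBG t tG.
apply: (coset_idr (groupX 2 tN)); rewrite morphX //.
apply/eqP; rewrite -order_dvdn.
have : #|Ge / Be| = 2 by rewrite card_quotient.
move=> <-; apply: order_dvdG; exact: mem_quotient.
Qed.

Lemma exists_s : exists s, [/\ s \in Ge :\: Be, s * s = 1, K1 :^ s = K2 & K2 :^ s = K1].
Proof.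
have [a [b [Ka Kb eab uniq]]] := mem_dprod dBe t2B.
have sK1B := normal_sub nK1; have sK2B := normal_sub nK2.
have nK1' := normal_norm nK1; have nK2' := normal_norm nK2.
have aB : a \in Be := subsetP sK1B a Ka.
have at2 : a ^ t \in K2 by rewrite memJ_conjg.
have bt1 : b ^ t \in K1.
  have : b ^ t \in K1 :^ (t * t) by rewrite conjsgM memJ_conjg.
  by rewrite -expg2 (normP (subsetP nK1' _ t2B)).
have tt : (t ^+ 2) ^ t = t ^+ 2 by rewrite conjXg conjgE mulKg.
have [e1 e2] : b ^ t = a /\ a ^ t = b.
  apply: uniq => //; rewrite -{1}tt eab conjMg; symmetry.
  exact: (centsP cK12).
exists (t * a^-1); split.
- rewrite inE (groupMr _ (groupVr aB)) tnB /=.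
  by rewrite (groupMr _ (groupVr (subsetP sBGe _ aB))).
- have -> : t * a^-1 * (t * a^-1) = t ^+ 2 * (a^-1 ^ t) * a^-1.
    by rewrite conjgE expg2 !mulgA mulgK.
  by rewrite eab conjVg e2 mulgK mulgV.
- by rewrite conjsgM (normP (subsetP nK2' _ (groupVr aB))).
- rewrite /K2 -conjsgM mulgA -expg2.
  by rewrite (normP (subsetP nK1' _ (groupM t2B (groupVr aB)))).
Qed.


Lemma isoGe : Ge \isog wreathA4C2.
Proof.
have [s [/setDP [sG snB] ss K1s K2s]] := exists_s.
have sK1B := normal_sub nK1; have sK2B := normal_sub nK2.
have os : #[s] = 2.
  have : #[s] %| 2 by rewrite order_dvdn expg2 ss.
  rewrite dvdn_divisors // !inE => /orP [] /eqP o1 //.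
  by move: snB; rewrite (_ : s = 1) ?group1 //; apply/eqP; rewrite -order_eq1 o1.
have dGe : Be ><| <[s]> = Ge.
  rewrite sdprodE ?cycle_subG ?(subsetP (normal_norm nBeGe)) //; last first.
    by rewrite setIC prime_TIg ?cycle_subG // [#|_|]os.
  apply/eqP; rewrite eqEcard mul_subG ?cycle_subG //= TI_cardMg; last first.
    by rewrite setIC prime_TIg ?cycle_subG // [#|_|]os.
  by rewrite -(Lagrange sBGe) iBe [#|<[s]>|]os.
have [psi injpsi impsi] := isogP isoK1.
have phi1M : {in K1 &, {morph (fun a => blk false (psi a)) : x y / x * y}}.
  by move=> x y Kx Ky /=; rewrite morphM // blkM.
pose phi1 := Morphism phi1M.
have K2sK1 x : x \in K2 -> x ^ s \in K1 by rewrite -K2s memJ_conjg.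
have phi2M : {in K2 &, {morph (fun b => blk true (psi (b ^ s))) : x y / x * y}}.
  by move=> x y Kx Ky /=; rewrite conjMg morphM ?K2sK1 // blkM.
pose phi2 := Morphism phi2M.
have cfHK : phi2 @* K2 \subset 'C(phi1 @* K1).
  apply/subsetP=> y /morphimP [b _ Kb ->]; apply/centP=> z /morphimP [a _ Ka ->].
  exact: esym (blk_comm _ _).
pose fH := dprodm dBe cfHK.
have dvd : #[sw] %| #[s] by rewrite os order_sw.
pose fK := eltm dvd.
have ssK y : y \in K1 -> (y ^ s) ^ s = y by move=> _; rewrite -conjgM ss conjg1.
have actf : {in Be & <[s]>, morph_act 'J 'J fH fK}.
  move=> x y Bx' /=; rewrite cycle2g // => /set2P [] ->.
    by rewrite !conjg1 /fK morph1 conjg1.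
  have [a [b [Ka Kb -> _]]] := mem_dprod dBe Bx'.
  have as2 : a ^ s \in K2 by rewrite -K1s memJ_conjg.
  have bs1 : b ^ s \in K1 := K2sK1 b Kb.
  rewrite /fK eltm_id conjMg.
  have -> : a ^ s * b ^ s = b ^ s * a ^ s by apply: esym; exact: (centsP cK12).
  rewrite /fH !dprodmE //= blkJ2 ssK //.
  exact: blk_comm.
pose Phi := sdprodm dGe actf.
have injPhi : 'injm Phi.
  rewrite injm_sdprodm; apply/and3P; split.
  - rewrite injm_dprodm; apply/and3P; split.
    + apply/injmP=> x y Kx Ky /= e.
      exact: (injmP injpsi) (blk_inj e).
    + apply/injmP=> x y Kx Ky /= e.
      exact: conjg_inj ((injmP injpsi) _ _ (K2sK1 x Kx) (K2sK1 y Ky) (blk_inj e)).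
    + apply/eqP/trivgP/subsetP=> z /setIP [/morphimP [a _ Ka ->] /morphimP [b _ Kb e]].
      by rewrite /= (blk_ft e) blk1 group1.
  - by rewrite injm_eltm os order_sw.
  - rewrite im_eltm setIC prime_TIg ?cycle_subG //; first by rewrite [#|_|]order_sw.
    change (sw \notin dprodm dBe cfHK @* Be); rewrite im_dprodm.
    apply/negP=> /mulsgP [u v /morphimP [a _ Ka ->] /morphimP [b _ Kb ->] e].
    by move: (sw_notin false true (psi a) (psi (b ^ s))); rewrite e eqxx.
have imPhi : Phi @* Ge = wreathA4C2.
  rewrite im_sdprodm im_eltm /fH im_dprodm.
  have A4a a : a \in K1 -> psi a \in A4 by move=> Ka; rewrite -impsi mem_morphim.
  apply/setP=> p; apply/idP/idP.
    case/mulsgP=> xy z /mulsgP [x y /morphimP [a _ Ka ->] /morphimP [b _ Kb ->] ->] Z ->.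
    rewrite cycle2g ?order_sw // in Z; case/set2P: Z => ->.
      by rewrite mulg1 wreath_mem0 ?A4a ?K2sK1.
    by rewrite wreath_mem1 ?A4a ?K2sK1.
  rewrite inE => /existsP [sb /existsP [a0 /existsP [a1 /and3P [A0 A1 /forallP E]]]].
  rewrite (wreath_dec E).
  move: A0 A1; rewrite -impsi => /morphimP [a _ Ka ->] /morphimP [a' _ Ka' ->].
  have Kb : a' ^ s \in K2 by rewrite -K1s memJ_conjg.
  apply: mem_mulg; first apply: mem_mulg.
  - by apply: (mem_morphim phi1).
  - by have := mem_morphim phi2 Kb Kb; rewrite /= ssK.
  - by case: (sb false); rewrite ?cycle_id ?group1.
by rewrite -imPhi; exact: sub_isog (subxx _) injPhi.
Qed.

End Main.


(* The amalgam (G_x, G_e, G_xy): G_x is a group Gx (in xT), G_e a group Ge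
   (in eT), and G_xy is given as the subgroup Bx of Gx identified with the
   subgroup Be of Ge via the isomorphism f : Bx -> Be.
   G_x^[1] = core of Bx in Gx (kernel of G_x on the 5 neighbours of x);
   G_y^[1] = (f @* G_x^[1]) :^ t for t in G_e \ G_xy, so
   G_xy^[1] = f @* G_x^[1] :&: (f @* G_x^[1]) :^ t  (computed inside G_e). *)
Theorem mainTheorem12 (xT eT : finGroupType)
  (Gx Bx : {group xT}) (Ge Be : {group eT}) (f : {morphism Bx >-> eT}) :
  Bx \subset Gx -> Be \subset Ge ->
  'injm f -> f @* Bx = Be ->
  #|Gx : Bx| = 5 -> #|Ge : Be| = 2 ->
  (* primitivity *)
  (forall L : {group xT}, L \subset Bx -> L <| Gx -> f @* L <| Ge -> L :=: 1) ->
  (* G_xy^[1] = 1 *)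
  (exists2 t, t \in Ge :\: Be &
     f @* gcore Bx Gx :&: (f @* gcore Bx Gx) :^ t = 1) ->
  (* G_x^[1] <> 1 *)
  gcore Bx Gx != 1 ->
  (* G_x / G_x^[1] ~= A_5 *)
  Gx / gcore Bx Gx \isog A5 ->
  Gx \isog setX A5 A4 /\ Ge \isog wreathA4C2.
Proof.
move=> sBG sBGe injf fB iB iBe _ [t tGe ti] ntK isoQ.
split; first exact: (isoGx sBG sBGe injf fB iB iBe tGe ti ntK isoQ).
exact: (isoGe sBG sBGe injf fB iB iBe tGe ti ntK isoQ).
Qed.
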